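(* Let $a,b$ be complex numbers such that $j^2-aj-b^2\neq 0$ for every positive integer $j$. Then $$\sum_{k=1}^{\infty}\frac{1}{k^2-ak-b^2}=\sum_{k=1}^{\infty}\frac{3k-a}{k\binom{2k}{k}}\cdot\frac{\prod_{j=1}^{k-1}(j^2-a^2-4b^2)}{\prod_{j=1}^{k}(j^2-aj-b^2)}.$$
   Context: The left-hand side equals the generating function $\sum_{r\ge0}\sum_{s\ge0}\binom{r+s}{r}\zeta(2+r+2s)a^rb^{2s}$ for small $|a|,|b|$. *)

(* Defs.v *)
From Stdlib Require Import Reals.
From Coquelicot Require Import Coquelicot.
Open Scope C_scope.

Definition natC (n : nat) : C := RtoC (INR n).

Fixpoint prodC (f : nat -> C) (n : nat) : C :=
  match n with
  | O => 1
  | S m => prodC f m * f (S m)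
  end.

Definition qden (a b : C) (j : nat) : C :=
  natC j * natC j - a * natC j - b * b.

Definition lhs_term (a b : C) (k : nat) : C := / qden a b k.

Definition rhs_term (a b : C) (k : nat) : C :=
  (3 * natC k - a) / (natC k * RtoC (Binomial.C (2 * k) k))
  * prodC (fun j => natC j * natC j - a * a - 4 * (b * b)) (k - 1)
  / prodC (qden a b) k.

(* Main.v *)
Require Import Defs.
From Stdlib Require Import Reals Lia Lra Psatz ZArith Factorial.
From Coquelicot Require Import Coquelicot.
Open Scope C_scope.

Lemma natC_S n : natC (S n) = natC n + 1.
Proof. unfold natC. rewrite S_INR, <- RtoC_plus. reflexivity. Qed.
Lemma natC_plus m n : natC (m + n) = natC m + natC n.
Proof. unfold natC. rewrite plus_INR, <- RtoC_plus. reflexivity. Qed.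

Definition pp (a b : C) (j : nat) : C := natC j * natC j - a * a - 4 * (b * b).
Fixpoint PP (a b : C) (k n : nat) : C := match n with
  | O => qden a b k | S m => PP a b k m * qden a b (k + S m) end.
Fixpoint cc (a b : C) (n : nat) : C := match n with
  | O => 1 | S m => cc a b m * (natC (S m) * pp a b (S m) / (2 * (2 * natC m + 1))) end.
Definition FF a b n k := cc a b n / PP a b k n.
Definition rr (a : C) n k : C := (2 * natC k + 3 * natC n + 1 - a) / (2 * (2 * natC n + 1)).
Definition HH a b n k := FF a b n k * rr a n k.

Lemma den_nz n : 2 * (2 * natC n + 1) <> 0.
Proof.
  unfold natC. intro H.
  assert (E : 2 * (2 * RtoC (INR n) + 1) = RtoC (2 * (2 * INR n + 1))).
  { rewrite RtoC_mult, RtoC_plus, RtoC_mult. reflexivity. }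
  rewrite E in H. apply (f_equal Re) in H. simpl in H.
  pose proof (pos_INR n). lra.
Qed.

Section S.
Variables (a b : C).
Hypothesis hab : forall j : nat, (1 <= j)%nat -> qden a b j <> 0.

Lemma PP_nz k n : (1 <= k)%nat -> PP a b k n <> 0.
Proof. intros Hk; induction n; simpl. apply hab; lia.
  apply Cmult_neq_0; auto. apply hab; lia. Qed.

Lemma PP_shift k n : PP a b k (S n) = qden a b k * PP a b (S k) n.
Proof. induction n.
  - simpl. replace (k+1)%nat with (S k) by lia. reflexivity.
  - change (PP a b k (S (S n))) with (PP a b k (S n) * qden a b (k + S (S n))).
    rewrite IHn. simpl. replace (k + S (S n))%nat with (S (k + S n)) by lia.
    rewrite Cmult_assoc. reflexivity.
Qed.

Lemma key n k : (1 <= k)%nat -> FF a b n k - FF a b (S n) k = HH a b n k - HH a b n (S k).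
Proof.
  intros Hk.
  assert (HX := PP_nz k n Hk).
  assert (HY : qden a b (k + S n) <> 0) by (apply hab; lia).
  assert (HZ : qden a b k <> 0) by (apply hab; lia).
  assert (E : PP a b (S k) n = PP a b k n * qden a b (k + S n) / qden a b k).
  { pose proof (PP_shift k n) as E. simpl in E. rewrite E. field. auto. }
  unfold HH, FF. rewrite E. simpl PP. simpl cc.
  revert HY HZ. unfold rr, pp, qden.
  rewrite !natC_S, !natC_plus, natC_S. intros HY HZ.
  pose proof (den_nz n).
  field. repeat split; auto.
  intro H0; apply H; rewrite H0; ring.
Qed.
End S.

Fixpoint csum (f : nat -> C) (n : nat) : C := match n with
  | O => 0 | S m => csum f m + f m end.

Lemma csum_ext f g n : (forall i, f i = g i) -> csum f n = csum g n.
Proof. intros H; induction n; simpl; auto. rewrite IHn, H; auto. Qed.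

Lemma csum_minus f g n : csum (fun i => f i - g i) n = csum f n - csum g n.
Proof. induction n; simpl. ring. rewrite IHn. ring. Qed.

Lemma csum_tele (h : nat -> C) n : csum (fun i => h i - h (S i)) n = h O - h n.
Proof. induction n; simpl. ring. rewrite IHn. ring. Qed.

Definition gR (n : nat) : R := (INR (fact n) ^ 2 / INR (fact (2 * n)))%R.

Lemma gR_S n : gR (S n) = (gR n * INR (S n) / (2 * (2 * INR n + 1)))%R.
Proof.
  unfold gR. replace (2 * S n)%nat with (S (S (2 * n))) by lia.
  rewrite !fact_simpl, !mult_INR, !S_INR, mult_INR. simpl INR.
  pose proof (INR_fact_neq_0 n). pose proof (INR_fact_neq_0 (2*n)). pose proof (pos_INR n).
  field. repeat split; auto; lra.
Qed.

Lemma binom_rel n : (INR (S n) * Binomial.C (2 * S n) (S n) * gR n = 2 * (2 * INR n + 1))%R.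
Proof.
  unfold Binomial.C, gR. replace (2 * S n - S n)%nat with (S n) by lia.
  replace (2 * S n)%nat with (S (S (2 * n))) by lia.
  rewrite !fact_simpl, !mult_INR, !S_INR, mult_INR. simpl INR.
  pose proof (INR_fact_neq_0 n). pose proof (INR_fact_neq_0 (2*n)). pose proof (pos_INR n).
  field. repeat split; auto; lra.
Qed.

Lemma binom_pos n : (0 < Binomial.C (2 * S n) (S n))%R.
Proof.
  unfold Binomial.C. apply Rdiv_lt_0_compat. apply INR_fact_lt_0.
  apply Rmult_lt_0_compat; apply INR_fact_lt_0.
Qed.

Section S.
Variables (a b : C).
Hypothesis hab : forall j : nat, (1 <= j)%nat -> qden a b j <> 0.

Lemma fin N K : csum (fun i => FF a b 0 (S i)) K =
  csum (fun m => HH a b m 1 - HH a b m (S K)) N + csum (fun i => FF a b N (S i)) K.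
Proof.
  induction N.
  - simpl. ring.
  - rewrite IHN. simpl.
    assert (E : csum (fun i => FF a b N (S i)) K =
      csum (fun i => FF a b N (S i) - FF a b (S N) (S i)) K + csum (fun i => FF a b (S N) (S i)) K).
    { rewrite csum_minus. ring. }
    rewrite E.
    rewrite (csum_ext (fun i => FF a b N (S i) - FF a b (S N) (S i)) (fun i => HH a b N (S i) - HH a b N (S (S i)))).

    2:{ intros i. apply key; auto; lia. }
    rewrite (csum_tele (fun i => HH a b N (S i))). ring.
Qed.

Lemma F0 k : FF a b 0 k = lhs_term a b k.
Proof. unfold FF, lhs_term. simpl. unfold Cdiv. ring. Qed.

Lemma cc_closed n : cc a b n = prodC (pp a b) n * RtoC (gR n).
Proof.
  induction n.
  - assert (G0 : gR 0 = 1%R) by (unfold gR; simpl; field). simpl. rewrite G0. ring.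
  - simpl cc. rewrite IHn. rewrite gR_S. simpl prodC.
    rewrite RtoC_div, !RtoC_mult, RtoC_plus, RtoC_mult.
    2:{ pose proof (pos_INR n). lra. }
    fold (natC (S n)). fold (natC n). pose proof (den_nz n).
    field. repeat split; auto. intro H0; apply H; rewrite H0; ring.
Qed.

Lemma PP1 n : PP a b 1 n = prodC (qden a b) (S n).
Proof. induction n. simpl. ring. simpl PP. rewrite IHn. reflexivity. Qed.

Lemma H1_rhs n : HH a b n 1 = rhs_term a b (S n).
Proof.
  unfold HH, FF, rhs_term. rewrite cc_closed, PP1.
  replace (S n - 1)%nat with n by lia.
  pose proof (binom_rel n) as E. apply (f_equal RtoC) in E.
  rewrite !RtoC_mult, RtoC_plus, RtoC_mult in E. fold (natC (S n)) (natC n) in E.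
  assert (HB : RtoC (Binomial.C (2 * S n) (S n)) <> 0).
  { intro H0. pose proof (binom_pos n). apply (f_equal Re) in H0. rewrite re_RtoC in H0. change (Re 0) with 0%R in H0. lra. }
  assert (HS : natC (S n) <> 0).
  { intro H0. pose proof (pos_INR n). apply (f_equal Re) in H0. unfold natC in H0. rewrite re_RtoC, S_INR in H0. change (Re 0) with 0%R in H0. lra. }
  assert (HP : prodC (qden a b) (S n) <> 0).
  { rewrite <- PP1. apply PP_nz; auto. }
  assert (HG : RtoC (gR n) = 2 * (2 * natC n + 1) / (natC (S n) * RtoC (Binomial.C (2 * S n) (S n)))).
  { rewrite <- E. field. split; auto. }
  rewrite HG. unfold rr. pose proof (den_nz n).
  rewrite natC_S. rewrite natC_S in HS.
  replace (natC 1) with (RtoC 1) by (unfold natC; simpl; reflexivity).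
  change (prodC (fun j : nat => natC j * natC j - a * a - 4 * (b * b)) n) with (prodC (pp a b) n).
  field. repeat split; auto. intro H0; apply H; rewrite H0; ring.
Qed.
End S.

Lemma Cmod_natC j : Cmod (natC j) = INR j.
Proof. unfold natC. rewrite Cmod_R. apply Rabs_pos_eq, pos_INR. Qed.

Lemma Cmod_minus_ge x y : (Cmod x - Cmod y <= Cmod (x - y))%R.
Proof. pose proof (Cmod_triangle (x - y) y). replace (x - y + y) with x in H by ring. lra. Qed.

Lemma Cmod_minus_le x y : (Cmod (x - y) <= Cmod x + Cmod y)%R.
Proof. pose proof (Cmod_triangle x (- y)). rewrite Cmod_opp in H. exact H. Qed.

Lemma Cmod_RtoC_pos (x : R) : (0 <= x)%R -> Cmod (RtoC x) = x.
Proof. intros. rewrite Cmod_R. apply Rabs_pos_eq; auto. Qed.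

Lemma nat_unbounded (c : R) : exists n : nat, (c <= INR n)%R.
Proof.
  destruct (archimed (Rabs c)) as [H1 _].
  exists (Z.to_nat (up (Rabs c))). rewrite INR_IZR_INZ, Z2Nat.id.
  - pose proof (Rle_abs c). lra.
  - apply le_IZR. pose proof (Rabs_pos c). lra.
Qed.

Section S.
Variables (a b : C).
Hypothesis hab : forall j : nat, (1 <= j)%nat -> qden a b j <> 0.
Let A := Cmod a.
Let B := Cmod b.

Lemma q_low i : (INR i ^ 2 - A * INR i - B ^ 2 <= Cmod (qden a b i))%R.
Proof.
  unfold qden.
  replace (natC i * natC i - a * natC i - b * b) with (natC i * natC i - (a * natC i + b * b)) by ring.
  eapply Rle_trans; [|apply Cmod_minus_ge].
  rewrite Cmod_mult, Cmod_natC.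
  pose proof (Cmod_triangle (a * natC i) (b * b)).
  rewrite !Cmod_mult, Cmod_natC in H. fold A B in H. simpl. lra.
Qed.

Lemma p_up j : (Cmod (pp a b j) <= INR j ^ 2 + A ^ 2 + 4 * B ^ 2)%R.
Proof.
  unfold pp.
  replace (natC j * natC j - a * a - 4 * (b * b)) with (natC j * natC j - (a * a + 4 * (b * b))) by ring.
  eapply Rle_trans; [apply Cmod_minus_le|].
  pose proof (Cmod_triangle (a * a) (4 * (b * b))).
  rewrite !Cmod_mult, Cmod_natC in *. rewrite Cmod_R, Rabs_pos_eq in H by lra.
  fold A B in H. simpl. lra.
Qed.

Definition cst := (2 * A + 2 * B ^ 2 + A ^ 2 + 4 * B ^ 2 + 2)%R.

Lemma q_big J i j : (cst <= INR J)%R -> (J <= i)%nat -> (j < i)%nat ->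
  (INR j ^ 2 + A ^ 2 + 4 * B ^ 2 <= 2 * Cmod (qden a b i))%R /\ (INR i ^ 2 <= 2 * Cmod (qden a b i))%R.
Proof.
  intros HJ Hi Hj. pose proof (q_low i).
  apply le_INR in Hi. apply lt_INR in Hj.
  assert (HA : (0 <= A)%R) by apply Cmod_ge_0.
  assert (HB : (0 <= B)%R) by apply Cmod_ge_0.
  pose proof (pos_INR j). unfold cst in HJ.
  set (x := INR i) in *. set (y := INR j) in *.
  assert (x * x >= cst * x)%R by (unfold cst; nra).
  unfold cst in H1. split; nra.
Qed.

Lemma m0_fin N : exists m, (0 < m)%R /\ forall i, (1 <= i)%nat -> (i < N)%nat -> (m <= Cmod (qden a b i))%R.
Proof.
  induction N.
  - exists 1%R. split. lra. intros; lia.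
  - destruct IHN as [m [Hm H]].
    destruct (Nat.eq_dec N 0) as [->|HN].
    + exists 1%R. split. lra. intros; lia.
    + assert (Hq : (0 < Cmod (qden a b N))%R) by (apply Cmod_gt_0, hab; lia).
      exists (Rmin m (Cmod (qden a b N))). split. apply Rmin_glb_lt; auto.
      intros i Hi HiN. destruct (Nat.eq_dec i N) as [->|Hne].
      * apply Rmin_r.
      * eapply Rle_trans. apply Rmin_l. apply H; lia.
Qed.

Lemma m0_ex : exists m, (0 < m)%R /\ forall i, (1 <= i)%nat -> (m <= Cmod (qden a b i))%R.
Proof.
  destruct (nat_unbounded cst) as [J HJ].
  destruct (m0_fin J) as [m [Hm H]].
  exists (Rmin m (1/2)). split. apply Rmin_glb_lt; lra.
  intros i Hi. destruct (le_lt_dec J i) as [HiJ|HiJ].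
  - destruct (q_big J i 0 HJ HiJ ltac:(lia)) as [_ H2].
    apply le_INR in Hi. simpl in Hi.
    eapply Rle_trans. apply Rmin_r. nra.
  - eapply Rle_trans. apply Rmin_l. apply H; lia.
Qed.

Definition TT n k := natC (S n) * pp a b (S n) / (2 * (2 * natC n + 1)) / qden a b (k + S n).

Lemma FF_S n k : (1 <= k)%nat -> FF a b (S n) k = FF a b n k * TT n k.
Proof.
  intros Hk. unfold FF, TT. simpl.
  pose proof (PP_nz a b hab k n Hk). assert (qden a b (k + S n) <> 0) by (apply hab; lia).
  pose proof (den_nz n). field. repeat split; auto. intro H2; apply H1; rewrite H2; ring.
Qed.

Definition uR n := (INR (S n) / (2 * (2 * INR n + 1)))%R.

Lemma Cmod_TT n k : (1 <= k)%nat -> Cmod (TT n k) = (uR n * Cmod (pp a b (S n)) / Cmod (qden a b (k + S n)))%R.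
Proof.
  intros Hk. unfold TT.
  assert (qden a b (k + S n) <> 0) by (apply hab; lia).
  pose proof (pos_INR n).
  assert (E : natC (S n) * pp a b (S n) / (2 * (2 * natC n + 1)) = RtoC (uR n) * pp a b (S n)).
  { unfold uR. rewrite RtoC_div by lra. rewrite !RtoC_mult, RtoC_plus, RtoC_mult.
    fold (natC (S n)) (natC n). pose proof (den_nz n). field.
    intro H2; apply H1; rewrite H2; ring. }
  rewrite E, Cmod_div, Cmod_mult, Cmod_RtoC_pos; auto.
  unfold uR. apply Rmult_le_pos. apply pos_INR. apply Rlt_le, Rinv_0_lt_compat. lra.
Qed.

Lemma uR_le n : (uR n <= 1/2)%R.
Proof. unfold uR. rewrite S_INR. pose proof (pos_INR n).
  apply Rmult_le_reg_r with (2 * (2 * INR n + 1))%R. lra. field_simplify; lra. Qed.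

Lemma uR_le3 n : (1 <= n)%nat -> (uR n <= 1/3)%R.
Proof. intros Hn. apply le_INR in Hn. simpl in Hn. unfold uR. rewrite S_INR.
  apply Rmult_le_reg_r with (2 * (2 * INR n + 1))%R. lra. field_simplify; lra. Qed.

Lemma uR_pos n : (0 <= uR n)%R.
Proof. unfold uR. pose proof (pos_INR n). apply Rmult_le_pos. apply pos_INR. apply Rlt_le, Rinv_0_lt_compat. lra. Qed.

Lemma TT_small J n k : (cst <= INR J)%R -> (J <= S n)%nat -> (1 <= k)%nat -> (Cmod (TT n k) <= 2/3)%R.
Proof.
  intros HJ HJn Hk. rewrite Cmod_TT by auto.
  assert (HJ2 : (2 <= J)%nat).
  { assert (2 <= INR J)%R. { unfold cst in HJ. assert (0 <= A)%R by apply Cmod_ge_0. assert (0 <= B)%R by apply Cmod_ge_0. nra. }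
    destruct J as [|[|J]]; simpl in H; try lra; lia. }
  destruct (q_big J (k + S n) (S n) HJ ltac:(lia) ltac:(lia)) as [H1 _].
  pose proof (p_up (S n)). pose proof (uR_le3 n ltac:(lia)). pose proof (uR_pos n).
  assert (Hq : (0 < Cmod (qden a b (k + S n)))%R) by (apply Cmod_gt_0, hab; lia).
  pose proof (Cmod_ge_0 (pp a b (S n))).
  apply Rmult_le_reg_r with (Cmod (qden a b (k + S n))). auto.
  field_simplify; try lra. nra.
Qed.

Lemma TT_any m0 J n k : (0 < m0)%R -> (forall i, (1 <= i)%nat -> (m0 <= Cmod (qden a b i))%R) ->
  (S n < J)%nat -> (1 <= k)%nat -> (Cmod (TT n k) <= (INR J ^ 2 + A ^ 2 + 4 * B ^ 2) / (2 * m0))%R.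
Proof.
  intros Hm Hm0 HJ Hk. rewrite Cmod_TT by auto.
  pose proof (p_up (S n)). pose proof (uR_le n). pose proof (uR_pos n).
  assert (Hq : (m0 <= Cmod (qden a b (k + S n)))%R) by (apply Hm0; lia).
  pose proof (Cmod_ge_0 (pp a b (S n))).
  apply lt_INR in HJ. pose proof (pos_INR (S n)).
  assert (INR (S n) ^ 2 <= INR J ^ 2)%R by (apply pow_incr; lra).
  apply Rmult_le_reg_r with (2 * m0 * Cmod (qden a b (k + S n)))%R. nra.
  field_simplify; try lra.
  assert (Cmod (pp a b (S n)) <= INR J ^ 2 + A ^ 2 + 4 * B ^ 2)%R by lra.
  assert (HX : (0 <= INR J ^ 2 + A ^ 2 + 4 * B ^ 2)%R) by (pose proof (Cmod_ge_0 (pp a b (S n))); lra).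
  set (X := (INR J ^ 2 + A ^ 2 + 4 * B ^ 2)%R) in *.
  set (Q := Cmod (qden a b (k + S n))) in *. set (P := Cmod (pp a b (S n))) in *.
  transitivity (P * m0)%R.
  { replace (2 * uR n * P * m0)%R with ((2 * uR n) * (P * m0))%R by ring.
    pose proof (Rmult_le_pos P m0 H2 (Rlt_le _ _ Hm)).
    apply Rle_trans with (1 * (P * m0))%R. apply Rmult_le_compat_r; lra. lra. }
  transitivity (X * m0)%R. apply Rmult_le_compat_r; lra.
  transitivity (X * Q)%R. apply Rmult_le_compat_l; lra.
  right. unfold X. ring.
Qed.

Lemma F_bound J M : (cst <= INR J)%R -> (0 <= M)%R ->
  (forall n k, (1 <= k)%nat -> (S n < J)%nat -> (Cmod (TT n k) <= M)%R) ->
  forall k n, (1 <= k)%nat ->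
  (Cmod (FF a b n k) * Cmod (qden a b k) <= (1 + 3/2 * M) ^ (Nat.min n J) * (2/3) ^ n)%R.
Proof.
  intros HJ HM HT k n Hk. set (be := (1 + 3/2 * M)%R).
  assert (Hbe : (1 <= be)%R) by (unfold be; lra).
  assert (Hq : qden a b k <> 0) by (apply hab; lia).
  induction n.
  - rewrite F0. unfold lhs_term. rewrite Cmod_inv by auto.
    rewrite Rinv_l. simpl. lra. intro H0. apply Hq, Cmod_eq_0, H0.
  - rewrite FF_S by auto. rewrite Cmod_mult.
    pose proof (Cmod_ge_0 (TT n k)). pose proof (Cmod_ge_0 (FF a b n k)).
    pose proof (Cmod_ge_0 (qden a b k)).
    replace (Cmod (FF a b n k) * Cmod (TT n k) * Cmod (qden a b k))%R
      with (Cmod (FF a b n k) * Cmod (qden a b k) * Cmod (TT n k))%R by ring.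
    assert (Hp : (0 <= be ^ Nat.min n J * (2/3) ^ n)%R).
    { apply Rmult_le_pos; apply pow_le; lra. }
    destruct (le_lt_dec J (S n)) as [HSJ|HSJ].
    + pose proof (TT_small J n k HJ HSJ Hk).
      apply Rle_trans with (be ^ Nat.min n J * (2/3) ^ n * (2/3))%R.
      * apply Rle_trans with (be ^ Nat.min n J * (2/3) ^ n * Cmod (TT n k))%R.
        apply Rmult_le_compat_r; auto. apply Rmult_le_compat_l; auto.
      * change ((2/3)^(S n))%R with ((2/3) * (2/3)^n)%R. replace (be ^ Nat.min n J * (2 / 3) ^ n * (2 / 3))%R
          with ((2/3) * (2/3) ^ n * be ^ Nat.min n J)%R by ring.
        rewrite (Rmult_comm (be ^ _)).
        apply Rmult_le_compat_l. apply Rmult_le_pos. lra. apply pow_le; lra.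
        apply Rle_pow; auto. lia.
    + pose proof (HT n k Hk HSJ).
      replace (Nat.min (S n) J) with (S (Nat.min n J)) by lia.
      apply Rle_trans with (be ^ Nat.min n J * (2/3) ^ n * M)%R.
      * apply Rle_trans with (be ^ Nat.min n J * (2/3) ^ n * Cmod (TT n k))%R.
        apply Rmult_le_compat_r; auto. apply Rmult_le_compat_l; auto.
      * change (be ^ S (Nat.min n J))%R with (be * be ^ (Nat.min n J))%R.
        change ((2/3)^(S n))%R with ((2/3) * (2/3)^n)%R.
        replace (be * be ^ Nat.min n J * (2 / 3 * (2 / 3) ^ n))%R
          with (be ^ Nat.min n J * (2/3) ^ n * (be * (2/3)))%R by ring.
        apply Rmult_le_compat_l; auto. unfold be. lra.
Qed.

Lemma F_bound2 J M : (cst <= INR J)%R -> (0 <= M)%R ->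
  (forall n k, (1 <= k)%nat -> (S n < J)%nat -> (Cmod (TT n k) <= M)%R) ->
  forall k n, (1 <= k)%nat ->
  (Cmod (FF a b n k) <= (1 + 3/2 * M) ^ J * (2/3) ^ n / Cmod (qden a b k))%R.
Proof.
  intros HJ HM HT k n Hk.
  assert (Hq : (0 < Cmod (qden a b k))%R) by (apply Cmod_gt_0, hab; lia).
  pose proof (F_bound J M HJ HM HT k n Hk).
  apply Rmult_le_reg_r with (Cmod (qden a b k)); auto.
  unfold Rdiv. rewrite Rmult_assoc, Rinv_l by lra. rewrite Rmult_1_r.
  eapply Rle_trans; [apply H|]. apply Rmult_le_compat_r. apply pow_le; lra.
  apply Rle_pow. lra. lia.
Qed.
End S.

Lemma lim_C_le (u : nat -> C) (l : C) (v : nat -> R) :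
  (exists N, forall n, (N <= n)%nat -> (Cmod (u n - l) <= v n)%R) ->
  is_lim_seq v 0%R -> filterlim u eventually (locally l).
Proof.
  intros [N HN] Hv. apply (proj2 (filterlim_locally_ball_norm (K := C_AbsRing) (U := C_NormedModule) u l)). intros eps.
  apply is_lim_seq_spec in Hv. destruct (Hv eps) as [N2 H2].
  exists (Nat.max N N2). intros n Hn.
  unfold ball_norm. change (norm (minus (u n) l)) with (Cmod (u n - l)).
  specialize (H2 n ltac:(lia)). specialize (HN n ltac:(lia)).
  rewrite Rminus_0_r in H2. apply Rabs_lt_between in H2. lra.
Qed.

Lemma lim_C_norm (u : nat -> C) (l : C) :
  filterlim u eventually (locally l) -> is_lim_seq (fun n => Cmod (u n - l)) 0%R.
Proof.
  intros H. apply is_lim_seq_spec. intros eps.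
  apply (proj1 (filterlim_locally_ball_norm (K := C_AbsRing) (U := C_NormedModule) u l)) with (eps := eps) in H.
  destruct H as [N HN]. exists N. intros n Hn. specialize (HN n Hn).
  unfold ball_norm in HN. change (norm (minus (u n) l)) with (Cmod (u n - l)) in HN.
  rewrite Rminus_0_r, Rabs_pos_eq by apply Cmod_ge_0. exact HN.
Qed.

Lemma lim_inv_S : is_lim_seq (fun N => / (INR (S N) + 1))%R 0%R.
Proof.
  replace (Finite 0) with (Rbar_inv p_infty) by reflexivity.
  apply is_lim_seq_inv. 2: discriminate.
  apply is_lim_seq_plus with p_infty 1%R.
  - apply (is_lim_seq_incr_1 INR). apply is_lim_seq_INR.
  - apply is_lim_seq_const.
  - reflexivity.
Qed.

Lemma lim_geom_S (q c : R) : (Rabs q < 1)%R -> is_lim_seq (fun N => c * q ^ (S N))%R 0%R.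
Proof.
  intros Hq. replace (Finite 0) with (Rbar_mult c 0) by (simpl; f_equal; ring).
  apply is_lim_seq_scal_l. apply (is_lim_seq_incr_1 (fun n => q ^ n)%R). apply is_lim_seq_geom; auto.
Qed.

Lemma ex_series_tele : ex_series (fun k => 2 * (/ INR (S k) - / INR (S (S k))))%R.
Proof.
  exists 2%R.
  assert (E : forall N, sum_n (fun k => 2 * (/ INR (S k) - / INR (S (S k))))%R N = (2 * (1 - / INR (S (S N))))%R).
  { induction N.
    - rewrite sum_O. simpl. field.
    - rewrite sum_Sn, IHN. change plus with Rplus. cbv beta. rewrite !S_INR. pose proof (pos_INR N). match goal with |- ?x = ?y => change (@eq R x y) end. field. lra. }
  unfold is_series. eapply filterlim_ext. intros x; symmetry; apply E.
  change (is_lim_seq (fun N => 2 * (1 - / INR (S (S N))))%R 2%R).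
  replace (Finite 2) with (Rbar_mult 2 (1 - 0)%R) by (simpl; f_equal; ring).
  apply is_lim_seq_scal_l. apply is_lim_seq_minus'. apply is_lim_seq_const.
  replace (Finite 0) with (Rbar_inv p_infty) by reflexivity.
  apply is_lim_seq_inv. 2: discriminate.
  pose proof is_lim_seq_INR as H0.
  apply (proj1 (is_lim_seq_incr_n INR 2 p_infty)) in H0.
  eapply is_lim_seq_ext. 2: apply H0. intros n. cbv beta. replace (n+2)%nat with (S (S n)) by lia. reflexivity.
Qed.

Fixpoint rsum (f : nat -> R) (n : nat) : R := match n with
  | O => 0%R | S m => (rsum f m + f m)%R end.

Lemma csum_Cmod f g n : (forall i, (i < n)%nat -> (Cmod (f i) <= g i)%R) -> (Cmod (csum f n) <= rsum g n)%R.
Proof.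
  induction n; intros H; simpl.
  - rewrite Cmod_0. lra.
  - eapply Rle_trans. apply Cmod_triangle. apply Rplus_le_compat. apply IHn; intros; apply H; lia. apply H; lia.
Qed.

Lemma rsum_const c n : rsum (fun _ => c) n = (INR n * c)%R.
Proof. induction n; simpl rsum. simpl; ring. rewrite IHn, S_INR. ring. Qed.

Lemma rsum_geom c n : (0 <= c)%R -> (rsum (fun m => (2/3) ^ m * c) n <= 3 * c)%R.
Proof.
  intros Hc. assert (E : rsum (fun m => (2/3) ^ m * c)%R n = (3 * c * (1 - (2/3) ^ n))%R).
  { induction n; simpl rsum. rewrite pow_O. field. rewrite IHn. rewrite <- tech_pow_Rmult. field. }
  rewrite E. pose proof (pow_le (2/3) n ltac:(lra)). nra.
Qed.

Lemma nat_le_pow n : (INR n <= 4 * (5/4) ^ n)%R.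
Proof.
  induction n. simpl; lra.
  rewrite S_INR. simpl pow. pose proof (pow_R1_Rle (5/4) n ltac:(lra)). lra.
Qed.

Lemma sum_n_csum (f : nat -> C) N : sum_n f N = csum f (S N).
Proof.
  induction N. rewrite sum_O. simpl. ring.
  rewrite sum_Sn, IHN. reflexivity.
Qed.

Lemma J_ge2 a b J : (cst a b <= INR J)%R -> (2 <= J)%nat.
Proof.
  intros HJ. assert (2 <= INR J)%R.
  { unfold cst in HJ. pose proof (Cmod_ge_0 a). pose proof (Cmod_ge_0 b). nra. }
  destruct J as [|[|J]]; simpl in H; try lra; lia.
Qed.

Lemma rr_bound a m k : (Cmod (rr a m k) <= (2 * INR k + 3 * INR m + 1 + Cmod a) / 2)%R.
Proof.
  unfold rr. pose proof (pos_INR m). pose proof (pos_INR k).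
  assert (E1 : 2 * natC k + 3 * natC m + 1 - a = RtoC (2 * INR k + 3 * INR m + 1) - a).
  { unfold natC. rewrite !RtoC_plus, !RtoC_mult. reflexivity. }
  assert (E2 : 2 * (2 * natC m + 1) = RtoC (2 * (2 * INR m + 1))).
  { unfold natC. rewrite !RtoC_mult, RtoC_plus, RtoC_mult. reflexivity. }
  rewrite E1, E2, Cmod_div. 2:{ rewrite <- E2. apply den_nz. }
  rewrite (Cmod_RtoC_pos (2 * (2 * INR m + 1))) by lra.
  pose proof (Cmod_minus_le (RtoC (2 * INR k + 3 * INR m + 1)) a).
  rewrite Cmod_RtoC_pos in H1 by lra.
  pose proof (Cmod_ge_0 (RtoC (2 * INR k + 3 * INR m + 1) - a)).
  apply Rmult_le_reg_r with (2 * (2 * INR m + 1))%R. lra.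
  field_simplify; try lra. pose proof (Cmod_ge_0 a). nra.
Qed.

Section Main.
Variables (a b : C).
Hypothesis hab : forall j : nat, (1 <= j)%nat -> qden a b j <> 0.

Lemma E2_bound D m0 K : (0 < m0)%R -> (forall i, (1 <= i)%nat -> (m0 <= Cmod (qden a b i))%R) -> (0 <= D)%R ->
  (forall k n, (1 <= k)%nat -> (Cmod (FF a b n k) <= D * (2/3) ^ n / Cmod (qden a b k))%R) ->
  (Cmod (csum (fun i => FF a b K (S i)) K) <= 4 * D / m0 * (5/6) ^ K)%R.
Proof.
  intros Hm Hmb HD HF.
  eapply Rle_trans. apply csum_Cmod with (g := fun _ => (D * (2/3) ^ K / m0)%R).
  - intros i _. eapply Rle_trans. apply HF; lia.
    assert (Hq : (m0 <= Cmod (qden a b (S i)))%R) by (apply Hmb; lia).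
    apply Rmult_le_compat_l. apply Rmult_le_pos; auto. apply pow_le; lra.
    apply Rinv_le_contravar; auto.
  - rewrite rsum_const. pose proof (nat_le_pow K).
    replace (5/6)%R with (5/4 * (2/3))%R by field. rewrite Rpow_mult_distr.
    pose proof (pow_le (2/3) K ltac:(lra)).
    assert (0 <= D * (2/3)^K / m0)%R. { apply Rmult_le_pos. apply Rmult_le_pos; auto. apply Rlt_le, Rinv_0_lt_compat; auto. }
    apply Rle_trans with (4 * (5/4) ^ K * (D * (2 / 3) ^ K / m0))%R.
    apply Rmult_le_compat_r; auto.
    right. field. lra.
Qed.

Lemma E1_bound D J K : (cst a b <= INR J)%R -> (J <= K)%nat -> (0 <= D)%R ->
  (forall k n, (1 <= k)%nat -> (Cmod (FF a b n k) <= D * (2/3) ^ n / Cmod (qden a b k))%R) ->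
  (Cmod (csum (fun m => HH a b m (S K)) K) <= 3 * D * (5 + Cmod a) / (INR K + 1))%R.
Proof.
  intros HJ HJK HD HF.
  assert (Hq : (0 < Cmod (qden a b (S K)))%R) by (apply Cmod_gt_0, hab; lia).
  destruct (q_big a b J (S K) 0 HJ ltac:(lia) ltac:(lia)) as [_ Hq2].
  rewrite S_INR in Hq2. pose proof (pos_INR K). pose proof (Cmod_ge_0 a).
  set (W := (D * ((5 + Cmod a) * (INR K + 1) / 2) / Cmod (qden a b (S K)))%R).
  assert (HW0 : (0 <= W)%R).
  { unfold W. apply Rmult_le_pos. apply Rmult_le_pos; auto. nra. apply Rlt_le, Rinv_0_lt_compat; auto. }
  eapply Rle_trans. apply csum_Cmod with (g := fun m => ((2/3) ^ m * W)%R).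
  - intros m Hm. unfold HH. rewrite Cmod_mult.
    pose proof (HF (S K) m ltac:(lia)). pose proof (rr_bound a m (S K)).
    apply lt_INR in Hm.
    assert (Hr : (Cmod (rr a m (S K)) <= (5 + Cmod a) * (INR K + 1) / 2)%R).
    { rewrite S_INR in H2. nra. }
    pose proof (Cmod_ge_0 (rr a m (S K))). pose proof (Cmod_ge_0 (FF a b m (S K))).
    eapply Rle_trans. apply Rmult_le_compat; eauto.
    unfold W. right. field. lra.
  - eapply Rle_trans. apply rsum_geom; auto.
    unfold W. 
    apply Rle_trans with (3 * (D * ((5 + Cmod a) * (INR K + 1) / 2) / ((INR K + 1) ^ 2 / 2)))%R.
    + apply Rmult_le_compat_l. lra. apply Rmult_le_compat_l.
      apply Rmult_le_pos; auto. nra. apply Rinv_le_contravar. nra. lra.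
    + right. field. lra.
Qed.
End Main.

Theorem mainTheorem1 (a b : C)
  (hab : forall j : nat, (1 <= j)%nat -> qden a b j <> 0) :
  exists l : C,
    is_series (fun n : nat => lhs_term a b (S n)) l /\
    is_series (fun n : nat => rhs_term a b (S n)) l.
Proof.
  destruct (nat_unbounded (cst a b)) as [J HJ].
  pose proof (J_ge2 a b J HJ) as HJ2.
  destruct (m0_ex a b hab) as [m0 [Hm0 Hm0b]].
  set (M := ((INR J ^ 2 + Cmod a ^ 2 + 4 * Cmod b ^ 2) / (2 * m0))%R).
  assert (HM : (0 <= M)%R).
  { unfold M. apply Rmult_le_pos. pose proof (pos_INR J). pose proof (Cmod_ge_0 a). pose proof (Cmod_ge_0 b). nra.
    apply Rlt_le, Rinv_0_lt_compat. lra. }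
  assert (HT : forall n k, (1 <= k)%nat -> (S n < J)%nat -> (Cmod (TT a b n k) <= M)%R).
  { intros n k Hk Hn. apply (TT_any a b hab m0 J n k); auto. }
  set (D := ((1 + 3/2 * M) ^ J)%R).
  assert (HD : (0 <= D)%R) by (apply pow_le; lra).
  assert (HF : forall k n, (1 <= k)%nat -> (Cmod (FF a b n k) <= D * (2/3) ^ n / Cmod (qden a b k))%R).
  { intros k n Hk. apply (F_bound2 a b hab J M HJ HM HT k n Hk). }
  assert (Hex : ex_series (fun n => lhs_term a b (S n))).
  { apply (proj2 (ex_series_incr_n _ J)).
    apply (ex_series_le (V := C_CompleteNormedModule)) with (b := fun k => (2 * (/ INR (S k) - / INR (S (S k))))%R).
    2: apply ex_series_tele.
    intros k. change (Cmod (lhs_term a b (S (J + k))) <= 2 * (/ INR (S k) - / INR (S (S k))))%R.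
    unfold lhs_term.
    assert (Hq : qden a b (S (J + k)) <> 0) by (apply hab; lia).
    rewrite Cmod_inv by auto.
    destruct (q_big a b J (S (J + k)) 0 HJ ltac:(lia) ltac:(lia)) as [_ H2].
    assert (Hi : (INR k + 2 <= INR (S (J + k)))%R).
    { replace (INR k + 2)%R with (INR (k + 2)) by (rewrite plus_INR; simpl; ring). apply le_INR. lia. }
    pose proof (pos_INR k).
    replace (2 * (/ INR (S k) - / INR (S (S k))))%R with (/ ((INR k + 1) * (INR k + 2) / 2))%R.
    2:{ rewrite !S_INR. field. lra. }
    apply Rinv_le_contravar. nra. nra. }
  destruct Hex as [l Hl]. exists l. split; auto.
  unfold is_series.
  apply lim_C_le with (v := fun N => (Cmod (sum_n (fun n => lhs_term a b (S n)) N - l)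
     + 3 * D * (5 + Cmod a) * / (INR (S N) + 1) + 4 * D / m0 * (5/6) ^ (S N))%R).
  - exists J. intros N HN.
    rewrite !sum_n_csum.
    pose proof (fin a b hab (S N) (S N)) as E.
    rewrite (csum_ext (fun i => FF a b 0 (S i)) (fun i => lhs_term a b (S i))) in E by (intros; apply F0).
    rewrite csum_minus in E.
    rewrite (csum_ext (fun m => HH a b m 1) (fun m => rhs_term a b (S m))) in E by (intros; apply H1_rhs; auto).
    pose proof (E1_bound a b hab D J (S N) HJ ltac:(lia) HD HF) as B1.
    pose proof (E2_bound a b D m0 (S N) Hm0 Hm0b HD HF) as B2.
    set (L := csum (fun i => lhs_term a b (S i)) (S N)) in *.
    set (R0 := csum (fun m => rhs_term a b (S m)) (S N)) in *.
    set (e1 := csum (fun m => HH a b m (S (S N))) (S N)) in *.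
    set (e2 := csum (fun i => FF a b (S N) (S i)) (S N)) in *.
    replace (R0 - l) with ((L - l) + e1 - e2) by (rewrite E; ring).
    eapply Rle_trans. apply Cmod_minus_le.
    eapply Rle_trans. apply Rplus_le_compat_r. apply Cmod_triangle.
    unfold Rdiv in B1. lra.
  - replace 0%R with (0 + 0 + 0)%R by ring.
    apply is_lim_seq_plus'. apply is_lim_seq_plus'.
    + apply lim_C_norm. exact Hl.
    + replace 0%R with (3 * D * (5 + Cmod a) * 0)%R by ring.
      apply is_lim_seq_mult'. apply is_lim_seq_const. apply lim_inv_S.
    + apply lim_geom_S. rewrite Rabs_pos_eq; lra.
Qed.
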